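(* Let $m\ge2$ and let $\mathcal{D}^b=(\Omega^b,\mathcal{B}^b)$ be the Boolean quadruple system of order $2^m$, and let $\mathcal{C}^b$ be the set of collinear triples of $\mathcal{D}^b$. Then $(\Omega^b,\mathcal{C}^b)$ is a regular two-graph and $\mathcal{D}^b$ satisfies property $(\triangle)$. Furthermore, for $\infty\in\Omega^b$, $\mathcal{L}_\infty(\mathcal{D}^b)\cong(\mathbb{F}_2)^m$ and $\pi_\infty(\mathcal{D}^b)$ is trivial.
   Context: The Boolean quadruple system of order $2^m$ has point set $\Omega^b=\mathbb{F}_2^m$ and line set $\mathcal{B}^b$ consisting of all $4$-subsets $\{v_1,v_2,v_3,v_4\}$ with $\sum v_i=0$; it is a supersimple $2$-$(2^m,4,2^{m-1}-1)$ design. A collinear triple is a $3$-subset contained in a line. $(\Omega,\mathcal{C})$ is a regular two-graph if it is a $2$-$(n,3,\mu)$ design and every $4$-subset contains $0,2$ or $4$ members of $\mathcal{C}$. Property $(\triangle)$: if $B_1,B_2\in\mathcal{B}$ with $|B_1\cap B_2|=2$ then $B_1\triangle B_2\in\mathcal{B}$. For distinct $a,b$ with lines $\{a,b,a_i,b_i\}$ through them, $[a,b]:=(a,b)\prod_i(a_i,b_i)$, $[a,a]:=1$; products left to right, $[a_0,\dots,a_k]:=[a_0,a_1]\cdots[a_{k-1},a_k]$; $\mathcal{L}_\infty$ = move sequences starting at $\infty$, $\pi_\infty$ = move sequences starting and ending at $\infty$. *)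

(* Defs.v *)
From HB Require Import structures.
From mathcomp Require Import all_boot all_order all_algebra all_fingroup.
Set Implicit Arguments. Unset Strict Implicit. Unset Printing Implicit Defensive.

(* A design: point set = the finType T, line set B : {set {set T}}. *)
Section Designs.
Variable T : finType.
Implicit Types (B C : {set {set T}}) (a b x : T).

Definition collinear_triples B : {set {set T}} :=
  [set S : {set T} | (#|S| == 3) && [exists L in B, S \subset L]].

Definition two_design_3 C (mu : nat) : Prop :=
  (forall S, S \in C -> #|S| = 3) /\
  (forall x y : T, x != y -> #|[set S in C | (x \in S) && (y \in S)]| = mu).

Definition regular_two_graph C : Prop :=
  (exists mu, two_design_3 C mu) /\
  (forall X : {set T}, #|X| = 4 ->
     #|[set S in C | S \subset X]| \in [:: 0; 2; 4]).

Definition prop_triangle B : Prop :=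
  forall B1 B2 : {set T}, B1 \in B -> B2 \in B -> #|B1 :&: B2| = 2 ->
    (B1 :\: B2) :|: (B2 :\: B1) \in B.

Definition other_pair (L : {set T}) a b : T * T :=
  let s := enum (L :\ a :\ b) in (nth a s 0, nth a s 1).

(* the move [a,b] = (a,b) prod_i (a_i,b_i), over the lines {a,b,a_i,b_i};
   [a,a] = 1.  Permutations are multiplied left to right (mathcomp: (s*t) x = t (s x)). *)
Definition move B a b : {perm T} :=
  if a == b then 1%g
  else (tperm a b * \prod_(L in B | (a \in L) && (b \in L))
                      tperm (other_pair L a b).1 (other_pair L a b).2)%g.

Fixpoint move_seq B (s : seq T) : {perm T} :=
  match s with
  | a :: ((b :: _) as s') => (move B a b * move_seq B s')%g
  | _ => 1%g
  end.

Definition in_L_inf B (inf : T) (g : {perm T}) : Prop :=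
  exists s : seq T, g = move_seq B (inf :: s).

Definition in_pi_inf B (inf : T) (g : {perm T}) : Prop :=
  exists s : seq T, last inf s = inf /\ g = move_seq B (inf :: s).

End Designs.

Definition boolean_lines (m : nat) : {set {set 'rV['F_2]_m}} :=
  [set L : {set 'rV['F_2]_m} | (#|L| == 4) && ((\sum_(v in L) v) == 0)%R].

(* Main.v *)
Require Import Defs.
From mathcomp Require Import all_boot all_order all_algebra all_fingroup.
Set Implicit Arguments. Unset Strict Implicit. Unset Printing Implicit Defensive.
Import GRing.Theory.

Lemma eq_sym_neq (I : eqType) (u v : I) : u != v -> v != u.
Proof. by rewrite eq_sym. Qed.

Section Prod.
Variable T : finType.
Local Open Scope group_scope.

Lemma prod_fix (I : eqType) (r : seq I) (P : pred I) (F : I -> {perm T}) z :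
  (forall i, i \in r -> P i -> F i z = z) -> (\prod_(i <- r | P i) F i) z = z.
Proof.
elim: r => [|j r IH] H; first by rewrite big_nil perm1.
rewrite big_cons; case: ifP => Pj.
  by rewrite permM H ?mem_head // IH // => i ir; apply: H; rewrite inE ir orbT.
by apply: IH => i ir; apply: H; rewrite inE ir orbT.
Qed.

Lemma prod_one (I : eqType) (r : seq I) (P : pred I) (F : I -> {perm T}) i0 x y :
  uniq r -> i0 \in r -> P i0 -> F i0 x = y ->
  (forall i, i \in r -> P i -> i != i0 -> F i x = x /\ F i y = y) ->
  (\prod_(i <- r | P i) F i) x = y.
Proof.
elim: r => [|j r IH] //= /andP[jr ur]; rewrite inE => i0r Pi0 Fi0 H.
rewrite big_cons; case: (eqVneq i0 j) => [ei0 | ni0].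
  subst j; rewrite Pi0 permM Fi0; apply: prod_fix => i ir Pi.
  have h1 : i \in i0 :: r by rewrite inE ir orbT.
  have h2 : i != i0 by apply: contraNneq jr => <-.
  by case: (H i h1 Pi h2).
have i0r' : i0 \in r by move: i0r; rewrite (negbTE ni0).
have H' : forall i, i \in r -> P i -> i != i0 -> F i x = x /\ F i y = y.
  by move=> i ir; apply: H; rewrite inE ir orbT.
case: ifP => Pj; last exact: IH.
rewrite permM.
have [-> _] := H j (mem_head _ _) Pj (negbT (negbTE (eq_sym_neq ni0))).
exact: IH.
Qed.

Lemma other_pairP (L : {set T}) a b : #|L :\ a :\ b| = 2 ->
  [/\ (other_pair L a b).1 \in L :\ a :\ b, (other_pair L a b).2 \in L :\ a :\ b
    & (other_pair L a b).1 != (other_pair L a b).2].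
Proof.
rewrite /other_pair cardE => sz /=.
have u := enum_uniq (mem (L :\ a :\ b)).
split; first by rewrite -mem_enum; apply: mem_nth; rewrite sz.
  by rewrite -mem_enum; apply: mem_nth; rewrite sz.
by rewrite nth_uniq ?sz.
Qed.
End Prod.

Section Bool.
Variable m : nat.
Local Notation V := 'rV['F_2]_m.
Local Notation B := (boolean_lines m).
Local Open Scope ring_scope.

Lemma addvv (v : V) : v + v = 0.
Proof. by apply/rowP=> i; rewrite !mxE; apply: addrr_pchar2; apply: pchar_Fp. Qed.

Lemma add0_eq (u w : V) : u + w = 0 -> u = w.
Proof. by move=> h; rewrite -[u]addr0 -(addvv w) addrA h add0r. Qed.

Lemma addKv (u w : V) : u + (u + w) = w.
Proof. by rewrite addrA addvv add0r. Qed.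

Lemma d_neq (a b x : V) : a != b -> a != x -> b != x ->
  [/\ a + b + x != a, a + b + x != b & a + b + x != x].
Proof.
move=> ab ax bx; split; apply/eqP=> h.
- move/eqP: bx; apply; apply: add0_eq.
  have e: a + (a + b + x) = b + x by rewrite !addrA addvv add0r.
  by rewrite -e h addvv.
- move/eqP: ax; apply; apply: add0_eq.
  have e: b + (a + b + x) = a + x by rewrite (addrC a b) !addrA addvv add0r.
  by rewrite -e h addvv.
- move/eqP: ab; apply; apply: add0_eq.
  have e: x + (a + b + x) = a + b by rewrite addrC -addrA addvv addr0.
  by rewrite -e h addvv.
Qed.

Definition L0 (a b x : V) : {set V} := a |: (b |: (x |: [set a + b + x])).

Lemma mem_L0 (a b x y : V) :
  (y \in L0 a b x) = [|| y == a, y == b, y == x | y == a + b + x].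
Proof. by rewrite /L0 !in_setU1 in_set1. Qed.

Lemma line_of3 (a b x : V) : a != b -> a != x -> b != x -> L0 a b x \in B.
Proof.
move=> ab ax bx; have [da db dx] := d_neq ab ax bx.
rewrite inE /L0; apply/andP; split.
  rewrite !cardsU1 cards1 !in_setU1 !in_set1 (negbTE ab) (negbTE ax) (negbTE bx).
  by rewrite !(eq_sym _ (a + b + x)) (negbTE da) (negbTE db) (negbTE dx).
rewrite big_setU1 /=; last by rewrite !in_setU1 in_set1 (negbTE ab) (negbTE ax) eq_sym (negbTE da).
rewrite big_setU1 /=; last by rewrite !in_setU1 in_set1 (negbTE bx) eq_sym (negbTE db).
rewrite big_setU1 /=; last by rewrite in_set1 eq_sym (negbTE dx).
rewrite big_set1.
have -> : a + (b + (x + (a + b + x))) = (a + b + x) + (a + b + x) by rewrite !addrA.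
by rewrite addvv.
Qed.

Lemma line_eq (L : {set V}) (a b x : V) : L \in B -> a \in L -> b \in L -> x \in L ->
  a != b -> a != x -> b != x -> L = L0 a b x.
Proof.
move=> LB aL bL xL ab ax bx; move: LB; rewrite inE => /andP[/eqP c4 /eqP s0].
have bL' : b \in L :\ a by rewrite in_setD1 eq_sym ab.
have xL' : x \in L :\ a :\ b by rewrite !in_setD1 eq_sym bx eq_sym ax.
have : #|L :\ a :\ b :\ x| == 1.
  move: c4; rewrite (cardsD1 a) aL (cardsD1 b (L :\ a)) bL' (cardsD1 x (L :\ a :\ b)) xL'.
  by move=> /= h; move: h; rewrite !add1n => -[->].
case/cards1P=> d Ed.
move: s0; rewrite (big_setD1 a) // (big_setD1 b) // (big_setD1 x) // Ed big_set1 /= => s0.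
have dE : d = a + b + x.
  apply: add0_eq; rewrite -s0 !addrA.
  by rewrite -!addrA addrC -!addrA (addrC x d) (addrC b) -!addrA.
rewrite -(setD1K aL) -(setD1K bL') -(setD1K xL') Ed dE.
done.
Qed.

Lemma card_ab (L : {set V}) a b : L \in B -> a \in L -> b \in L -> a != b ->
  #|L :\ a :\ b| = 2.
Proof.
rewrite inE => /andP[/eqP c4 _] aL bL ab.
have bL' : b \in L :\ a by rewrite in_setD1 eq_sym ab.
by move: c4; rewrite (cardsD1 a) aL (cardsD1 b (L :\ a)) bL' /= !add1n => -[].
Qed.

Lemma move_val a b x : move B a b x = x + (a + b).
Proof.
rewrite /move; case: (eqVneq a b) => [<-|ab]; first by rewrite perm1 addvv addr0.
rewrite permM.
have Hop : forall L, L \in B -> a \in L -> b \in L ->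
  [/\ (other_pair L a b).1 \in L :\ a :\ b, (other_pair L a b).2 \in L :\ a :\ b
    & (other_pair L a b).1 != (other_pair L a b).2].
  by move=> L LB aL bL; apply: other_pairP; apply: card_ab.
case: (eqVneq x a) => [-> | xa].
  rewrite tpermL prod_fix ?addKv // => L _ /andP[LB /andP[aL bL]].
  have [c1 c2 _] := Hop L LB aL bL.
  by move: c1 c2; rewrite !in_setD1 => /andP[c1 _] /andP[c2 _]; rewrite tpermD.
case: (eqVneq x b) => [-> | xb].
  rewrite tpermR prod_fix; first by rewrite (addrC a) addKv.
  move=> L _ /andP[LB /andP[aL bL]].
  have [c1 c2 _] := Hop L LB aL bL.
  by move: c1 c2; rewrite !in_setD1 => /andP[_ /andP[c1 _]] /andP[_ /andP[c2 _]]; rewrite tpermD.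
have ax : a != x by rewrite eq_sym.
have bx : b != x by rewrite eq_sym.
rewrite tpermD //.
have [da db dx] := d_neq ab ax bx.
have -> : x + (a + b) = a + b + x by rewrite addrC.
apply: (@prod_one _ _ _ _ _ (L0 a b x)).
- exact: index_enum_uniq.
- exact: mem_index_enum.
- by rewrite line_of3 // !mem_L0 !eqxx !orbT.
- have aL0 : a \in L0 a b x by rewrite mem_L0 eqxx.
  have bL0 : b \in L0 a b x by rewrite mem_L0 eqxx orbT.
  have [c1 c2 ce] := Hop _ (line_of3 ab ax bx) aL0 bL0.
  have HL : forall z, z \in L0 a b x :\ a :\ b -> (z == x) || (z == a + b + x).
    by move=> z; rewrite !in_setD1 mem_L0 => /andP[zb /andP[za]]; rewrite (negbTE zb) (negbTE za).
  move: ce; case/orP: (HL _ c1) => /eqP ->; case/orP: (HL _ c2) => /eqP -> //=;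
    rewrite ?eqxx // => _; by rewrite ?tpermL ?tpermR.
- move=> L _ /andP[LB /andP[aL bL]] LL0.
  have [c1 c2 _] := Hop L LB aL bL.
  have xL : x \notin L by apply: contra LL0 => xL; apply/eqP; apply: line_eq.
  have dL : a + b + x \notin L.
    apply: contra xL => dL.
    have := line_eq LB aL bL dL ab (eq_sym_neq da) (eq_sym_neq db).
    by move=> ->; rewrite mem_L0 addrA addvv add0r eqxx !orbT.
  have nz : forall z, z \in L :\ a :\ b -> z != x /\ z != a + b + x.
    move=> z; rewrite !in_setD1 => /andP[_ /andP[_ zL]].
    split; apply/eqP => e; move: zL; rewrite e; exact/negP.
  have [n1 n2] := nz _ c1; have [n3 n4] := nz _ c2.
  by rewrite !tpermD.
Qed.

Lemma move_seq_val a s z : move_seq B (a :: s) z = z + (a + last a s).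
Proof.
elim: s a z => [|b s IH] a z; first by rewrite /= perm1 addvv addr0.
have -> : move_seq B [:: a, b & s] = (move B a b * move_seq B (b :: s))%g by [].
by rewrite permM move_val IH /= -!addrA addKv.
Qed.

Definition tr (v : V) : {perm V} := perm (@addIr _ v).

Lemma trE v x : tr v x = x + v.
Proof. by rewrite permE. Qed.

Lemma move_seq_tr a s : move_seq B (a :: s) = tr (a + last a s).
Proof. by apply/permP => z; rewrite move_seq_val trE. Qed.

Lemma trM : {in [set: V] &, {morph tr : x y / (x * y)%g >-> (x * y)%g}}.
Proof. by move=> x y _ _; apply/permP => z; rewrite permM !trE FinRing.zmodMgE addrA. Qed.

Definition trm : {morphism [set: V] >-> {perm V}} := Morphism trM.

Lemma trm_inj : ('injm trm)%g.
Proof.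
apply/injmP => x y _ _ /= e.
by have := congr1 (fun p : {perm V} => p 0) e; rewrite /= !trE !add0r.
Qed.

Lemma part3 (inf : V) : exists G : {group {perm V}},
      (forall g, g \in G <-> in_L_inf B inf g) /\ (G \isog [set: V])%g.
Proof.
exists (trm @* [set: V])%G; split.
  move=> g; rewrite /= (morphimEsub trm (subxx _)); split.
    case/imsetP => v _ ->; exists [:: inf + v]; rewrite move_seq_tr /=.
    by rewrite addKv.
  by case=> s ->; rewrite move_seq_tr; apply/imsetP; exists (inf + last inf s); rewrite ?inE.
by rewrite isog_sym; apply: sub_isog => //; exact: trm_inj.
Qed.

Lemma part4 (inf : V) g : in_pi_inf B inf g -> g = 1%g.
Proof.
case=> s [hl ->]; apply/permP => z; rewrite move_seq_val hl addvv addr0.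
by rewrite perm1.
Qed.

Lemma coll3 S : (S \in collinear_triples B) = (#|S| == 3).
Proof.
rewrite inE; apply/andP/idP => [[->]//|c3]; split => //.
have [a aS] : exists a, a \in S by apply/set0Pn; rewrite -card_gt0 (eqP c3).
have : #|S :\ a| == 2 by move: c3; rewrite (cardsD1 a) aS.
case/cards2P => b [c [bc Ea]].
have : a \notin S :\ a by rewrite in_setD1 eqxx.
rewrite Ea !inE negb_or => /andP[ab ac].
apply/existsP; exists (L0 a b c); rewrite line_of3 //=.
rewrite -(setD1K aS) Ea; apply/subsetP => y; rewrite mem_L0 !inE.
by case/or3P => ->; rewrite ?eqxx ?orbT.
Qed.

Lemma part1 : regular_two_graph (collinear_triples B).
Proof.
split.
  exists (#|V| - 2)%N; split; first by move=> S; rewrite coll3 => /eqP.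
  move=> x y xy.
  have E : [set S in collinear_triples B | (x \in S) && (y \in S)] =
           [set x |: (y |: [set z]) | z in ~: (x |: [set y])].
    apply/setP => S; rewrite inE coll3; apply/idP/imsetP.
      case/andP => /eqP c3 /andP[xS yS].
      have yS' : y \in S :\ x by rewrite in_setD1 eq_sym xy.
      have : #|S :\ x :\ y| == 1.
        by move: c3; rewrite (cardsD1 x) xS (cardsD1 y (S :\ x)) yS' /= !add1n => -[->].
      case/cards1P => z Ez.
      have zS : z \in S :\ x :\ y by rewrite Ez in_set1.
      move: (zS); rewrite !in_setD1 => /andP[zy /andP[zx _]].
      exists z; first by rewrite !inE negb_or zx zy.
      by rewrite -(setD1K xS) -(setD1K yS') Ez.
    case=> z; rewrite in_setC in_setU1 in_set1 negb_or => /andP[zx zy] ->.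
    rewrite !cardsU1 cards1 !in_setU1 !in_set1 !eqxx (negbTE xy).
    by rewrite (negbTE (eq_sym_neq zx)) (negbTE (eq_sym_neq zy)) !orbT.
  rewrite E card_in_imset.
    by rewrite -(cardsC (x |: [set y])) cardsU1 cards1 in_set1 xy addKn.
  move=> z1 z2; rewrite !in_setC !in_setU1 !in_set1 !negb_or => /andP[z1x z1y] /andP[z2x z2y] e.
  have : z1 \in x |: (y |: [set z2]) by rewrite -e !in_setU1 in_set1 eqxx !orbT.
  by rewrite !in_setU1 in_set1 (negbTE z1x) (negbTE z1y) => /eqP.
move=> X c4.
have E : [set S in collinear_triples B | S \subset X] = [set X :\ z | z in X].
  apply/setP => S; rewrite inE coll3; apply/idP/imsetP.
    case/andP => /eqP c3 sSX.
    have : #|X :\: S| == 1 by rewrite cardsD c4 (setIidPr sSX) c3.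
    case/cards1P => z Ez.
    have zXS : z \in X :\: S by rewrite Ez in_set1.
    have zX : z \in X by move: zXS; rewrite in_setD => /andP[].
    exists z => //; apply/setP => y; rewrite in_setD1.
    have ey : (y \in X :\: S) = (y == z) by rewrite Ez in_set1.
    rewrite in_setD in ey.
    case: (boolP (y \in S)) => yS.
      by rewrite (subsetP sSX y yS) andbT; move: ey; rewrite yS /= => <-.
    case: (boolP (y \in X)) => yX; rewrite ?andbF ?andbT //.
    by move: ey; rewrite yS yX /= => <-.
  case=> z zX ->; rewrite subD1set andbT.
  by move: c4; rewrite (cardsD1 z) zX add1n => -[->].
rewrite E card_in_imset ?c4 //.
move=> z1 z2 z1X z2X e; case: (eqVneq z1 z2) => // ne.
have : z1 \in X :\ z2 by rewrite in_setD1 z1X ne.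
by rewrite -e in_setD1 eqxx.
Qed.

Lemma part2 : prop_triangle B.
Proof.
move=> B1 B2; rewrite !inE => /andP[/eqP c1 /eqP s1] /andP[/eqP c2 /eqP s2] c12.
have dj : (B1 :\: B2) :&: (B2 :\: B1) = set0.
  by apply/setP => y; rewrite !inE; case: (y \in B1); case: (y \in B2).
apply/andP; split.
  rewrite cardsU dj cards0 subn0 !cardsD c1 c2 c12 setIC c12.
  by [].
have sU : \sum_(v in (B1 :\: B2) :|: (B2 :\: B1)) v =
   \sum_(v in B1 :\: B2) v + \sum_(v in B2 :\: B1) v.
  rewrite -bigU //=; last by rewrite -setI_eq0 dj.
  by apply: eq_bigl => y; rewrite !inE.
rewrite sU.
have e1 := s1; rewrite (big_setID B2) /= in e1.
have e2 := s2; rewrite (big_setID B1) /= setIC in e2.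
rewrite (add0_eq (etrans (addrC _ _) e1)) (add0_eq (etrans (addrC _ _) e2)).
by rewrite addvv.
Qed.
End Bool.

Theorem lemma2p8 (m : nat) (hm : 2 <= m) (inf : 'rV['F_2]_m) :
  regular_two_graph (collinear_triples (boolean_lines m)) /\
  prop_triangle (boolean_lines m) /\
  (exists G : {group {perm 'rV['F_2]_m}},
      (forall g, g \in G <-> in_L_inf (boolean_lines m) inf g) /\
      (G \isog [set: 'rV['F_2]_m])%g) /\
  (forall g, in_pi_inf (boolean_lines m) inf g -> g = 1%g).
Proof.
split; first exact: part1.
split; first exact: part2.
split; first exact: part3.
exact: part4.
Qed.
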